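(* For all $n,m,N\in\mathbb{Z}$ the following bilinear equations hold: \begin{align*} &\tau^{n,m}_{N+1}\tau^{n+1,m+1}_{N} -Q^{-3n+3m+2N-2}\gamma^{2}{\alpha_1}^{3}\tau^{n+1,m}_{N}\tau^{n,m+1}_{N+1} +Q^{-6n+6m+4N-4}\gamma^{4}{\alpha_1}^{6}\tau^{n,m}_{N}\tau^{n+1,m+1}_{N+1}=0,\\ &\tau^{n+1,m}_{N+1}\tau^{n,m}_{N} -Q^{-3m+2N+1}\gamma^{2}{\alpha_2}^{3}\tau^{n+1,m+1}_{N}\tau^{n,m-1}_{N+1} +Q^{-6m+4N+2}\gamma^{4}{\alpha_2}^{6}\tau^{n+1,m}_{N}\tau^{n,m}_{N+1}=0,\\ &\tau^{n+1,m+1}_{N+1}\tau^{n+1,m}_{N} -Q^{3n+2N+4}\gamma^{2}{\alpha_0}^{3}\tau^{n,m}_{N}\tau^{n+2,m+1}_{N+1} +Q^{6n+4N+8}\gamma^{4}{\alpha_0}^{6}\tau^{n+1,m+1}_{N}\tau^{n+1,m}_{N+1}=0,\\ &\tau^{n+1,m+1}_{N+1}\tau^{n,m}_{N} -Q^{-3n+3m-2N-4}\gamma^{-2}{\alpha_1}^{3}\tau^{n+1,m}_{N+1}\tau^{n,m+1}_{N} +Q^{-6n+6m-4N-8}\gamma^{-4}{\alpha_1}^{6}\tau^{n+1,m+1}_{N}\tau^{n,m}_{N+1}=0,\\ &\tau^{n,m}_{N+1}\tau^{n+1,m}_{N} -Q^{-3m-2N-1}\gamma^{-2}{\alpha_2}^{3}\tau^{n+1,m+1}_{N+1}\tau^{n,m-1}_{N}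 +Q^{-6m-4N-2}\gamma^{-4}{\alpha_2}^{6}\tau^{n,m}_{N}\tau^{n+1,m}_{N+1}=0,\\ &\tau^{n+1,m}_{N+1}\tau^{n+1,m+1}_{N} -Q^{3n-2N+2}\gamma^{-2}{\alpha_0}^{3}\tau^{n,m}_{N+1}\tau^{n+2,m+1}_{N} +Q^{6n-4N+4}\gamma^{-4}{\alpha_0}^{6}\tau^{n+1,m}_{N}\tau^{n+1,m+1}_{N+1}=0. \end{align*}
   Context: Let $Q\in\mathbb{C}^\times$ be generic and let $\alpha_0,\alpha_1,\gamma$ be indeterminates; put $\alpha_2:=Q\alpha_0^{-1}\alpha_1^{-1}$, so $\alpha_0\alpha_1\alpha_2=Q$ (sixth roots of the usual parameters: $q=Q^6$, $a_i=\alpha_i^6$, $c=\gamma^6$). Let $\tau_i,\bar\tau_i$ ($i\in\mathbb{Z}/3\mathbb{Z}$) be six further indeterminates and $K=\mathbb{C}(\alpha_0,\alpha_1,\gamma,\tau_0,\tau_1,\tau_2,\bar\tau_0,\bar\tau_1,\bar\tau_2)$. Indices are taken mod 3. Define field automorphisms $s_0,s_1,s_2,\pi,w_0,w_1,r$ of $K$ (fixing $\mathbb{C}$): on parameters $s_i(\alpha_i)=\alpha_i^{-1}$, $s_i(\alpha_j)=\alpha_j\alpha_i$ ($j\neq i$), $\pi(\alpha_j)=\alpha_{j+1}$, $s_i(\gamma)=\pi(\gamma)=\gamma$; $w_0,w_1,r$ fix every $\alpha_j$, and $w_0(\gamma)=\gamma^{-1}$, $w_1(\gamma)=Q^{-2}\gamma^{-1}$,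 $r(\gamma)=Q^{-1}\gamma^{-1}$. With $u_i=Q^{-2}\gamma^{-4}\alpha_i^6$, $v_i=Q^{2}\gamma^{4}\alpha_i^6$: $s_i(\tau_i)=\dfrac{u_i\tau_{i+1}\bar\tau_{i-1}+\bar\tau_{i+1}\tau_{i-1}}{Q^{-1}\gamma^{-2}\alpha_i^{3}\,\bar\tau_i}$, $s_i(\bar\tau_i)=\dfrac{v_i\bar\tau_{i+1}\tau_{i-1}+\tau_{i+1}\bar\tau_{i-1}}{Q\gamma^{2}\alpha_i^{3}\,\tau_i}$, $s_i$ fixes $\tau_j,\bar\tau_j$ ($j\ne i$); $\pi(\tau_i)=\tau_{i+1}$, $\pi(\bar\tau_i)=\bar\tau_{i+1}$; $w_0(\tau_i)=\tau_i$, $w_0(\bar\tau_i)=\dfrac{\alpha_{i+1}^2(\bar\tau_i\tau_{i+1}\tau_{i+2}+u_{i-1}\tau_i\bar\tau_{i+1}\tau_{i+2}+u_{i+1}^{-1}\tau_i\tau_{i+1}\bar\tau_{i+2})}{\alpha_{i+2}^2\,\bar\tau_{i+1}\bar\tau_{i+2}}$; $w_1(\bar\tau_i)=\bar\tau_i$, $w_1(\tau_i)=\dfrac{\alpha_{i+1}^2(\tau_i\bar\tau_{i+1}\bar\tau_{i+2}+v_{i-1}\bar\tau_i\tau_{i+1}\bar\tau_{i+2}+v_{i+1}^{-1}\bar\tau_i\bar\tau_{i+1}\tau_{i+2})}{\alpha_{i+2}^2\,\tau_{i+1}\tau_{i+2}}$; $r(\tau_i)=\bar\tau_i$, $r(\bar\tau_i)=\tau_i$.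 Products of generators denote composition ($xy=x\circ y$). Set $T_1=\pi s_2s_1$, $T_2=s_1\pi s_2$, $T_4=rw_0$ (these commute), and define $\tau^{n,m}_N=T_1^{\,n}T_2^{\,m}T_4^{\,N}(\tau_1)$ for $n,m,N\in\mathbb{Z}$. *)

(* Defs.v *)
From HB Require Import structures.
From mathcomp Require Import all_boot all_order all_algebra.
From mathcomp Require Import mpoly.
Set Implicit Arguments. Unset Strict Implicit. Unset Printing Implicit Defensive.
Import Order.TTheory GRing.Theory Num.Theory.
Local Open Scope ring_scope.

Section B6.
Variable C : numClosedFieldType.

(* K = C(Q, alpha0, alpha1, gamma, tau0, tau1, tau2, taub0, taub1, taub2):
   the field of rational functions in 10 indeterminates over C.
   (Q is treated as an indeterminate: this encodes "Q generic") *)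
Definition K := {fraction {mpoly C[10]}}.

Definition Gen (k : nat) : K := tofrac ('X_(inord k) : {mpoly C[10]}).
Definition cst (c : C) : K := tofrac (c%:MP : {mpoly C[10]}).

Definition Qv : K := Gen 0.
Definition gam : K := Gen 3.
Definition alpha (i : 'I_3) : K :=
  if val i == 0%N then Gen 1 else if val i == 1%N then Gen 2
  else Qv / (Gen 1 * Gen 2).
Definition tau (i : 'I_3) : K := Gen (4 + i).
Definition taub (i : 'I_3) : K := Gen (7 + i).

Definition u (i : 'I_3) : K := Qv ^- 2 * gam ^- 4 * alpha i ^+ 6.
Definition v (i : 'I_3) : K := Qv ^+ 2 * gam ^+ 4 * alpha i ^+ 6.

Definition autK (f : {rmorphism K -> K}) (finv : K -> K) : Prop :=
  [/\ cancel f finv, cancel finv f & forall c : C, f (cst c) = cst c].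

(* Q is an element of the base field, hence fixed by all the automorphisms *)
Definition sB6_spec (s : {rmorphism K -> K}) (i : 'I_3) : Prop :=
  [/\ s Qv = Qv, s gam = gam,
      s (alpha i) = (alpha i)^-1 &
      forall j, j != i -> s (alpha j) = alpha j * alpha i] /\
  [/\
      s (tau i) = (u i * tau (i + 1) * taub (i - 1) + taub (i + 1) * tau (i - 1))
                   / (Qv^-1 * gam ^- 2 * alpha i ^+ 3 * taub i),
      s (taub i) = (v i * taub (i + 1) * tau (i - 1) + tau (i + 1) * taub (i - 1))
                   / (Qv * gam ^+ 2 * alpha i ^+ 3 * tau i)
    & forall j, j != i -> s (tau j) = tau j /\ s (taub j) = taub j].

Definition piB6_spec (p : {rmorphism K -> K}) : Prop :=
  [/\ p Qv = Qv, p gam = gam,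
      forall j, p (alpha j) = alpha (j + 1),
      forall j, p (tau j) = tau (j + 1)
    & forall j, p (taub j) = taub (j + 1)].

Definition w0B6_spec (w : {rmorphism K -> K}) : Prop :=
  [/\ w Qv = Qv, forall j, w (alpha j) = alpha j,
      w gam = gam^-1,
      forall i, w (tau i) = tau i
    & forall i, w (taub i) =
        alpha (i + 1) ^+ 2 * (taub i * tau (i + 1) * tau (i + 2)
                             + u (i - 1) * tau i * taub (i + 1) * tau (i + 2)
                             + (u (i + 1))^-1 * tau i * tau (i + 1) * taub (i + 2))
        / (alpha (i + 2) ^+ 2 * taub (i + 1) * taub (i + 2))].

Definition w1B6_spec (w : {rmorphism K -> K}) : Prop :=
  [/\ w Qv = Qv, forall j, w (alpha j) = alpha j,
      w gam = Qv ^- 2 * gam^-1,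
      forall i, w (taub i) = taub i
    & forall i, w (tau i) =
        alpha (i + 1) ^+ 2 * (tau i * taub (i + 1) * taub (i + 2)
                             + v (i - 1) * taub i * tau (i + 1) * taub (i + 2)
                             + (v (i + 1))^-1 * taub i * taub (i + 1) * tau (i + 2))
        / (alpha (i + 2) ^+ 2 * tau (i + 1) * tau (i + 2))].

Definition rB6_spec (r : {rmorphism K -> K}) : Prop :=
  [/\ r Qv = Qv, forall j, r (alpha j) = alpha j,
      r gam = Qv^-1 * gam^-1,
      forall i, r (tau i) = taub i
    & forall i, r (taub i) = tau i].

Definition powz (f finv : K -> K) (z : int) : K -> K :=
  match z with
  | Posz n => iter n f
  | Negz n => iter n.+1 finv
  end.

(* tau^{n,m}_N = T1^n T2^m T4^N (tau_1), with T1 = pi s2 s1, T2 = s1 pi s2,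
   T4 = r w0 (composition xy = x o y) *)
Definition tauNM (s : 'I_3 -> {rmorphism K -> K}) (si : 'I_3 -> K -> K)
    (p : {rmorphism K -> K}) (pinv : K -> K)
    (w0 : {rmorphism K -> K}) (w0inv : K -> K)
    (r : {rmorphism K -> K}) (rinv : K -> K) (n m N : int) : K :=
  let s1 := s (inord 1) in let s2 := s (inord 2) in
  let s1i := si (inord 1) in let s2i := si (inord 2) in
  let T1 := fun x => p (s2 (s1 x)) in
  let T1i := fun x => s1i (s2i (pinv x)) in
  let T2 := fun x => s1 (p (s2 x)) in
  let T2i := fun x => s2i (pinv (s1i x)) in
  let T4 := fun x => r (w0 x) in
  let T4i := fun x => w0inv (rinv x) in
  powz T1 T1i n (powz T2 T2i m (powz T4 T4i N (tau (inord 1)))).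

End B6.

(* Main.v *)
Require Import Defs.
From HB Require Import structures.
From mathcomp Require Import all_boot all_order all_algebra.
From mathcomp Require Import mpoly.
From mathcomp Require Import ring.
Set Implicit Arguments. Unset Strict Implicit. Unset Printing Implicit Defensive.
Import Order.TTheory GRing.Theory Num.Theory.
Local Open Scope ring_scope.

Section PZ.
Variable T : Type.
Definition pz (f fi : T -> T) (z : int) : T -> T :=
  match z with Posz n => iter n f | Negz n => iter n.+1 fi end.
Section One.
Variables (f fi : T -> T) (fK : cancel f fi) (fKV : cancel fi f).
Lemma pzS z x : pz f fi (z + 1) x = f (pz f fi z x).
Proof.
case: z => [n|[|n]].
- by rewrite -[1]/(Posz 1) -PoszD addn1.
- by rewrite /= fKV.
- have -> : Negz n.+1 + 1 = Negz n by rewrite !NegzE -addn1 PoszD opprD addrNK.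
  by rewrite /= fKV.
Qed.
Lemma pzP z x : pz f fi (z - 1) x = fi (pz f fi z x).
Proof. by rewrite -{2}(subrK 1 z) pzS fK. Qed.
Lemma pz_add a b x : pz f fi (a + b) x = pz f fi a (pz f fi b x).
Proof.
elim/int_rec: a => [|n IH|n IH]; first by rewrite add0r.
- by rewrite -addn1 PoszD addrAC !pzS IH.
- by rewrite -addn1 PoszD opprD addrAC !pzP IH.
Qed.
End One.
Lemma pz_comm1 (h hi u : T -> T) (hK : cancel h hi) (hKV : cancel hi h)
  (uh : forall x, u (h x) = h (u x)) z x :
  u (pz h hi z x) = pz h hi z (u x).
Proof.
have uhi y : u (hi y) = hi (u y) by apply: (can_inj hK); rewrite -uh !hKV.
case: z => [n|n] /=.
- by elim: n => [|n IH] //; rewrite iterS uh IH.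
- elim: n => [|n IH]; first by rewrite /= uhi.
  by rewrite iterS uhi IH.
Qed.
Lemma pz_comm (f fi h hi : T -> T) (fK : cancel f fi) (fKV : cancel fi f)
  (hK : cancel h hi) (hKV : cancel hi h) (fh : forall x, f (h x) = h (f x)) a b x :
  pz f fi a (pz h hi b x) = pz h hi b (pz f fi a x).
Proof.
have fih y : fi (h y) = h (fi y) by apply: (can_inj fK); rewrite fh !fKV.
case: a => n /=.
- by elim: n => [|n IH] //; rewrite iterS IH (pz_comm1 hK hKV fh).
- elim: n => [|n IH]; first by rewrite /= (pz_comm1 hK hKV fih).
  by rewrite iterS IH (pz_comm1 hK hKV fih).
Qed.
End PZ.

Section RMs.
Variable F : fieldType.
Definition RM (h : F -> F) := [/\ forall x y, h (x + y) = h x + h y,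
  forall x y, h (x * y) = h x * h y, h 1 = 1 & forall x, h x = 0 -> x = 0].
Variable h : F -> F.
Hypothesis hR : RM h.
Lemma RM_D x y : h (x + y) = h x + h y. Proof. by case: hR. Qed.
Lemma RM_M x y : h (x * y) = h x * h y. Proof. by case: hR. Qed.
Lemma RM_1 : h 1 = 1. Proof. by case: hR. Qed.
Lemma RM_0 : h 0 = 0.
Proof. by apply: (addrI (h 0)); rewrite -RM_D !addr0. Qed.
Lemma RM_inj0 x : h x = 0 -> x = 0. Proof. by case: hR => _ _ _; apply. Qed.
Lemma RM_N x : h (- x) = - h x.
Proof. by apply/eqP; rewrite -subr_eq0 opprK -RM_D addNr RM_0. Qed.
Lemma RM_B x y : h (x - y) = h x - h y. Proof. by rewrite RM_D RM_N. Qed.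
Lemma RM_X x n : h (x ^+ n) = h x ^+ n.
Proof. by elim: n => [|n IH]; rewrite ?RM_1 // !exprS RM_M IH. Qed.
Lemma RM_V x : h (x^-1) = (h x)^-1.
Proof.
have [->|nx] := eqVneq x 0; first by rewrite invr0 RM_0 invr0.
have hx : h x != 0 by apply/eqP => /RM_inj0 /eqP; rewrite (negPf nx).
by apply: (mulIf hx); rewrite -RM_M mulVf // mulVf // RM_1.
Qed.
Lemma RM_Xz x z : h (x ^ z) = h x ^ z.
Proof. by case: z => n; rewrite /exprz ?RM_V RM_X. Qed.
End RMs.

Lemma RM_comp (F : fieldType) (h1 h2 : F -> F) : RM h1 -> RM h2 -> RM (h1 \o h2).
Proof.
move=> R1 R2; split => [x y|x y||x] /=.
- by rewrite !RM_D.
- by rewrite !RM_M.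
- by rewrite !RM_1.
- by move/(RM_inj0 R1)/(RM_inj0 R2).
Qed.
Lemma RM_rm (F : fieldType) (f : {rmorphism F -> F}) : RM f.
Proof.
split => [x y|x y||x]; rewrite ?rmorphD ?rmorphM ?rmorph1 //.
by move/eqP; rewrite fmorph_eq0 => /eqP.
Qed.
Lemma RM_inv (F : fieldType) (f fi : F -> F) : cancel f fi -> cancel fi f -> RM f -> RM fi.
Proof.
move=> fK fKV R; split => [x y|x y||x].
- by rewrite -{1}(fKV x) -{1}(fKV y) -RM_D // fK.
- by rewrite -{1}(fKV x) -{1}(fKV y) -RM_M // fK.
- by rewrite -{1}(RM_1 R) fK.
- by move=> H; rewrite -(fKV x) H RM_0.
Qed.
Lemma RM_id (F : fieldType) : RM (@idfun F). Proof. by []. Qed.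
Lemma RM_iter (F : fieldType) (f : F -> F) n : RM f -> RM (iter n f).
Proof.
move=> R; elim: n => [|n IH] /=; first by split.
split => [x y|x y||x] /=; rewrite ?(RM_D IH) ?(RM_D R) ?(RM_M IH) ?(RM_M R) ?(RM_1 IH) ?(RM_1 R) //.
by move/(RM_inj0 R)/(RM_inj0 IH).
Qed.
Lemma RM_pz (F : fieldType) (f fi : F -> F) z : cancel f fi -> cancel fi f -> RM f ->
  RM (pz f fi z).
Proof. move=> fK fKV R; case: z => n /=; apply: RM_iter => //; exact: RM_inv R. Qed.

Lemma pz_fix (T : Type) (f fi : T -> T) (fK : cancel f fi) (fKV : cancel fi f) y :
  f y = y -> forall z, pz f fi z y = y.
Proof.
move=> fy; have fiy : fi y = y by rewrite -{1}fy fK.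
by case=> n /=; elim: n => [|n IH] //=; rewrite IH.
Qed.

Lemma pz_scale (F : fieldType) (f fi : F -> F) (fK : cancel f fi) (fKV : cancel fi f)
  (R : RM f) (k y : F) : k != 0 -> f k = k -> f y = k * y -> forall z, pz f fi z y = k ^ z * y.
Proof.
move=> k0 fk fy.
have Ri := RM_inv fK fKV R.
have fik : fi k = k by rewrite -{1}fk fK.
have fiy : fi y = k^-1 * y.
  by apply: (can_inj fK); rewrite fKV (RM_M R) (RM_V R) fk fy mulKf.
elim/int_rec => [|n IH|n IH]; first by rewrite expr0z mul1r.
- by rewrite -addn1 PoszD (pzS fKV) IH (RM_M R) (RM_Xz R) fk fy expfzDr // expr1z mulrA.
- rewrite -addn1 PoszD opprD (pzP fK fKV) IH (RM_M Ri) (RM_Xz Ri) fik fiy.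
  by rewrite expfzDr // exprN1 mulrA.
Qed.

Section Coef.
Variable F : fieldType.
Variables (x y z : F) (e0 e k1 k2 : int).
Hypotheses (x0 : x != 0) (y0 : y != 0).
Lemma coefA23 : e = e0 + (k1 + k1) + (k2 + k2 + k2) ->
  x ^ e0 * (x ^ k1 * y) ^+ 2 * (x ^ k2 * z) ^+ 3 = x ^ e * y ^+ 2 * z ^+ 3.
Proof. by move=> ->; rewrite !expfzDr //; ring. Qed.
Lemma coefA46 : e = e0 + (k1 + k1 + k1 + k1) + (k2 + k2 + k2 + k2 + k2 + k2) ->
  x ^ e0 * (x ^ k1 * y) ^+ 4 * (x ^ k2 * z) ^+ 6 = x ^ e * y ^+ 4 * z ^+ 6.
Proof. by move=> ->; rewrite !expfzDr //; ring. Qed.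
Lemma coefB23 : e = e0 - (k1 + k1) + (k2 + k2 + k2) ->
  x ^ e0 * ((x ^ k1 * y) ^+ 2)^-1 * (x ^ k2 * z) ^+ 3 = x ^ e * (y ^+ 2)^-1 * z ^+ 3.
Proof.
move=> ->; rewrite !expfzDr // -invr_expz !expfzDr //.
have h1 := expfz_neq0 k1 x0; field; by rewrite ?h1 ?y0.
Qed.
Lemma coefB46 : e = e0 - (k1 + k1 + k1 + k1) + (k2 + k2 + k2 + k2 + k2 + k2) ->
  x ^ e0 * ((x ^ k1 * y) ^+ 4)^-1 * (x ^ k2 * z) ^+ 6 = x ^ e * (y ^+ 4)^-1 * z ^+ 6.
Proof.
move=> ->; rewrite !expfzDr // -invr_expz !expfzDr //.
have h1 := expfz_neq0 k1 x0; field; by rewrite ?h1 ?y0.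
Qed.
End Coef.
Lemma I3_11 (i : 'I_3) : i + 1 + 1 = i + 2.
Proof. by case: i => [[|[|[|//]]] ?]; apply/val_inj. Qed.
Lemma I3_21 (i : 'I_3) : i + 2 + 1 = i.
Proof. by case: i => [[|[|[|//]]] ?]; apply/val_inj. Qed.
Lemma I3_12 (i : 'I_3) : i + 1 + 2 = i.
Proof. by case: i => [[|[|[|//]]] ?]; apply/val_inj. Qed.
Lemma I3_22 (i : 'I_3) : i + 2 + 2 = i + 1.
Proof. by case: i => [[|[|[|//]]] ?]; apply/val_inj. Qed.
Lemma I3_m1 (i : 'I_3) : i - 1 = i + 2.
Proof. by case: i => [[|[|[|//]]] ?]; apply/val_inj. Qed.
Lemma I3_1m1 (i : 'I_3) : i + 1 - 1 = i.
Proof. by case: i => [[|[|[|//]]] ?]; apply/val_inj. Qed.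
Lemma I3_2m1 (i : 'I_3) : i + 2 - 1 = i + 1.
Proof. by case: i => [[|[|[|//]]] ?]; apply/val_inj. Qed.
Definition I3E := (I3_11, I3_21, I3_12, I3_22, I3_1m1, I3_2m1, I3_m1).
Lemma I3_cases (i j : 'I_3) : [\/ j = i, j = i + 1 | j = i + 2].
Proof.
case: i => [[|[|[|//]]] ?]; case: j => [[|[|[|//]]] ?];
 by [apply: Or31; apply/val_inj|apply: Or32; apply/val_inj|apply: Or33; apply/val_inj].
Qed.
Lemma I3_n10 (i : 'I_3) : i + 1 != i. Proof. by case: i => [[|[|[|//]]] ?]. Qed.
Lemma I3_n20 (i : 'I_3) : i + 2 != i. Proof. by case: i => [[|[|[|//]]] ?]. Qed.
Lemma I3_n01 (i : 'I_3) : i != i + 1. Proof. by case: i => [[|[|[|//]]] ?]. Qed.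
Lemma I3_n02 (i : 'I_3) : i != i + 2. Proof. by case: i => [[|[|[|//]]] ?]. Qed.
Lemma I3_n21 (i : 'I_3) : i + 2 != i + 1. Proof. by case: i => [[|[|[|//]]] ?]. Qed.
Lemma I3_n12 (i : 'I_3) : i + 1 != i + 2. Proof. by case: i => [[|[|[|//]]] ?]. Qed.

Section Abs.
Variable F : fieldType.
Variable isC : F -> Prop.
Variables (Q g : F) (al ta tb : 'I_3 -> F).
Hypotheses (Q_nz : Q != 0) (g_nz : g != 0) (al_nz : forall j, al j != 0)
  (ta_nz : forall j, ta j != 0) (tb_nz : forall j, tb j != 0).
Hypothesis ext : forall f h : {rmorphism F -> F},
  (forall c, isC c -> f c = h c) -> f Q = h Q -> f g = h g ->
  (forall j, f (al j) = h (al j)) -> (forall j, f (ta j) = h (ta j)) ->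
  (forall j, f (tb j) = h (tb j)) -> f =1 h.
Variables (s : 'I_3 -> {rmorphism F -> F}) (si : 'I_3 -> F -> F)
    (p : {rmorphism F -> F}) (pinv : F -> F)
    (w0 : {rmorphism F -> F}) (w0inv : F -> F)
    (r : {rmorphism F -> F}) (rinv : F -> F).
Hypotheses (sK : forall i, cancel (s i) (si i)) (sKV : forall i, cancel (si i) (s i))
  (sC : forall i c, isC c -> s i c = c)
  (sQ : forall i, s i Q = Q) (sg : forall i, s i g = g)
  (sa_d : forall i, s i (al i) = (al i)^-1)
  (sa_n : forall i j, j != i -> s i (al j) = al j * al i)
  (sta_d : forall i, s i (ta i) = (Q ^- 2 * g ^- 4 * al i ^+ 6 * ta (i+1) * tb (i+2)
   + tb (i+1) * ta (i+2)) / (Q^-1 * g ^- 2 * al i ^+ 3 * tb i))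
  (stb_d : forall i, s i (tb i) = (Q ^+ 2 * g ^+ 4 * al i ^+ 6 * tb (i+1) * ta (i+2)
   + ta (i+1) * tb (i+2)) / (Q * g ^+ 2 * al i ^+ 3 * ta i))
  (sta_n : forall i j, j != i -> s i (ta j) = ta j)
  (stb_n : forall i j, j != i -> s i (tb j) = tb j).
Hypotheses (pK : cancel p pinv) (pKV : cancel pinv p) (pC : forall c, isC c -> p c = c)
  (pQ : p Q = Q) (pg : p g = g) (pa : forall j, p (al j) = al (j + 1))
  (pta : forall j, p (ta j) = ta (j + 1)) (ptb : forall j, p (tb j) = tb (j + 1)).
Hypotheses (wK : cancel w0 w0inv) (wKV : cancel w0inv w0) (wC : forall c, isC c -> w0 c = c)
  (wQ : w0 Q = Q) (wg : w0 g = g^-1) (wa : forall j, w0 (al j) = al j)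
  (wta : forall j, w0 (ta j) = ta j)
  (wtb : forall i, w0 (tb i) = al (i+1) ^+ 2 * (tb i * ta (i+1) * ta (i+2)
      + Q ^- 2 * g ^- 4 * al (i+2) ^+ 6 * ta i * tb (i+1) * ta (i+2)
      + (Q ^- 2 * g ^- 4 * al (i+1) ^+ 6)^-1 * ta i * ta (i+1) * tb (i+2))
      / (al (i+2) ^+ 2 * tb (i+1) * tb (i+2))).
Hypotheses (rK : cancel r rinv) (rKV : cancel rinv r) (rC : forall c, isC c -> r c = c)
  (rQ : r Q = Q) (rg : r g = Q^-1 * g^-1) (ra : forall j, r (al j) = al j)
  (rta : forall j, r (ta j) = tb j) (rtb : forall j, r (tb j) = ta j).
Hypothesis alQ : forall i, al i * al (i+1) * al (i+2) = Q.

Ltac push := rewrite ?(rmorphD, rmorphB, rmorphN, rmorphM, fmorphV, rmorphXn, rmorph1).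
Ltac dist i := have := I3_n10 i; have := I3_n20 i; have := I3_n01 i;
  have := I3_n02 i; have := I3_n21 i; have := I3_n12 i; move=> ? ? ? ? ? ?.
Ltac simp := do ?[ progress push | progress rewrite ?I3E
  | progress rewrite ?sQ ?sg ?pQ ?pg ?wQ ?wg ?rQ ?rg ?pa ?pta ?ptb ?wa ?wta ?ra ?rta ?rtb
  | progress rewrite ?sa_d ?sta_d ?stb_d | progress rewrite ?wtb
  | rewrite sa_n; last done | rewrite sta_n; last done | rewrite stb_n; last done ].
Ltac nz := rewrite ?(Q_nz, g_nz, al_nz, ta_nz, tb_nz).

Lemma s_neq0 i x : x != 0 -> s i x != 0.
Proof. by rewrite fmorph_eq0. Qed.
Lemma Nta i : Q ^- 2 * g ^- 4 * al i ^+ 6 * ta (i+1) * tb (i+2) + tb (i+1) * ta (i+2) != 0.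
Proof.
have := @s_neq0 i (ta i) (ta_nz i); rewrite sta_d; apply: contra => /eqP ->.
by rewrite mul0r.
Qed.
Lemma Ntb i : Q ^+ 2 * g ^+ 4 * al i ^+ 6 * tb (i+1) * ta (i+2) + ta (i+1) * tb (i+2) != 0.
Proof.
have := @s_neq0 i (tb i) (tb_nz i); rewrite stb_d; apply: contra => /eqP ->.
by rewrite mul0r.
Qed.
Ltac nzp := match goal with
  | H : is_true (?N != 0) |- is_true (?X != 0) =>
      rewrite (_ : X = N); [done | ring]
  end.
Ltac fin := field; rewrite ?(Q_nz, g_nz, al_nz, ta_nz, tb_nz, oner_neq0);
  repeat (apply/andP; split); rewrite ?andbT //; try nzp.
Lemma NtaP i : al i ^+ 6 * ta (i+1) * tb (i+2) + Q ^+ 2 * g ^+ 4 * tb (i+1) * ta (i+2) != 0.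
Proof.
have := Nta i; apply: contra => /eqP H; apply/eqP.
have -> : Q ^- 2 * g ^- 4 * al i ^+ 6 * ta (i+1) * tb (i+2) + tb (i+1) * ta (i+2)
  = (Q ^- 2 * g ^- 4) * (al i ^+ 6 * ta (i+1) * tb (i+2) + Q ^+ 2 * g ^+ 4 * tb (i+1) * ta (i+2)).
  by field; rewrite Q_nz g_nz.
by rewrite H mulr0.
Qed.
Ltac ctx i := have := NtaP i; have := Ntb i; have := NtaP (i+1); have := Ntb (i+1);
  have := NtaP (i+2); have := Ntb (i+2); rewrite ?I3E => ? ? ? ? ? ?.

Lemma S2 i : s i \o s i =1 idfun.
Proof.
dist i; ctx i.
apply: ext => [c hc|||j|j|j] /=; [by rewrite !sC|..]; simp => //.
all: case: (I3_cases i j) => ->; simp => //.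
all: fin.
Qed.


Lemma BR i : s i \o s (i+1) \o s i =1 s (i+1) \o s i \o s (i+1).
Proof.
dist i; ctx i.
apply: ext => [c hc|||j|j|j] /=; [by rewrite !sC|..]; simp => //.
all: case: (I3_cases i j) => ->; simp => //.
all: fin.
Qed.

Lemma PS i : p \o s i =1 s (i+1) \o p.
Proof.
dist i; ctx i.
apply: ext => [c hc|||j|j|j] /=; [by rewrite pC ?sC ?pC|..]; simp => //.
all: case: (I3_cases i j) => ->; simp => //.
all: fin.
Qed.

Lemma RS i : r \o s i =1 s i \o r.
Proof.
dist i; ctx i.
apply: ext => [c hc|||j|j|j] /=; [by rewrite rC ?sC ?rC|..]; simp => //.
all: case: (I3_cases i j) => ->; simp => //.
all: fin.
Qed.

Lemma RP : r \o p =1 p \o r.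
Proof.
apply: ext => [c hc|||j|j|j] /=; [by rewrite rC ?pC ?rC|..]; simp => //.
all: fin.
Qed.

Lemma WP : w0 \o p =1 p \o w0.
Proof.
apply: ext => [c hc|||j|j|j] /=; [by rewrite wC ?pC ?wC|..]; simp => //.
all: fin.
Qed.

Lemma NWP i : Q ^+ 2 * g ^+ 4 * al (i+1) ^+ 6 * tb i * ta (i+1) * ta (i+2)
  + al (i+1) ^+ 6 * al (i+2) ^+ 6 * ta i * tb (i+1) * ta (i+2)
  + Q ^+ 4 * g ^+ 8 * ta i * ta (i+1) * tb (i+2) != 0.
Proof.
have : w0 (tb i) != 0 by rewrite fmorph_eq0.
set N := (X in _ -> X != 0).
have -> : w0 (tb i) = al (i+1) ^+ 2 * ((Q ^+ 2 * g ^+ 4 * al (i+1) ^+ 6)^-1 * N)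
   / (al (i + 2) ^+ 2 * tb (i + 1) * tb (i + 2)).
  by rewrite wtb /N; field; rewrite ?(Q_nz, g_nz, al_nz, ta_nz, tb_nz).
by apply: contra => /eqP ->; rewrite !(mulr0, mul0r).
Qed.

Lemma WS i : w0 \o s i =1 s i \o w0.
Proof.
dist i; ctx i.
apply: ext => [c hc|||j|j|j] /=; [by rewrite wC ?sC ?wC|..]; simp => //.
all: case: (I3_cases i j) => ->; simp => //.
all: try fin.
all: rewrite -(alQ i); fin.
match goal with |- is_true (?X != 0) =>
  have HN := NWP i; rewrite -(alQ i) in HN; move: HN; apply: contra => /eqP HX;
  apply/eqP; match goal with |- ?N = 0 =>
     rewrite (_ : N = al (i+1) ^+ 4 * al (i+2) ^+ 2 * X); [by rewrite HX mulr0 | ring] end end.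
Qed.


Definition i0 : 'I_3 := inord 0.
Definition i1 : 'I_3 := inord 1.
Definition i2 : 'I_3 := inord 2.
Lemma i01 : i0 + 1 = i1. Proof. by apply: val_inj; rewrite /= /i0 /i1 /i2 !inordK. Qed.
Lemma i12 : i1 + 1 = i2. Proof. by apply: val_inj; rewrite /= /i0 /i1 /i2 !inordK. Qed.
Lemma i20 : i2 + 1 = i0. Proof. by apply: val_inj; rewrite /= /i0 /i1 /i2 !inordK. Qed.
Lemma i02 : i0 + 2 = i2. Proof. by apply: val_inj; rewrite /= /i0 /i1 /i2 !inordK. Qed.
Lemma i10 : i1 + 2 = i0. Proof. by apply: val_inj; rewrite /= /i0 /i1 /i2 !inordK. Qed.
Lemma i21 : i2 + 2 = i1. Proof. by apply: val_inj; rewrite /= /i0 /i1 /i2 !inordK. Qed.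
Definition iE := (i01, i12, i20, i02, i10, i21).
Lemma n01 : i0 != i1. Proof. by rewrite -val_eqE /i0 /i1 /i2 /= !inordK. Qed.
Lemma n02 : i0 != i2. Proof. by rewrite -val_eqE /i0 /i1 /i2 /= !inordK. Qed.
Lemma n10 : i1 != i0. Proof. by rewrite -val_eqE /i0 /i1 /i2 /= !inordK. Qed.
Lemma n12 : i1 != i2. Proof. by rewrite -val_eqE /i0 /i1 /i2 /= !inordK. Qed.
Lemma n20 : i2 != i0. Proof. by rewrite -val_eqE /i0 /i1 /i2 /= !inordK. Qed.
Lemma n21 : i2 != i1. Proof. by rewrite -val_eqE /i0 /i1 /i2 /= !inordK. Qed.

Lemma S2x i x : s i (s i x) = x. Proof. exact: (S2 i x). Qed.
Lemma si_s i x : si i x = s i x.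
Proof. by rewrite -{1}(S2x i x) sK. Qed.
Lemma PSx i x : p (s i x) = s (i+1) (p x). Proof. exact: (PS i x). Qed.
Lemma RSx i x : r (s i x) = s i (r x). Proof. exact: (RS i x). Qed.
Lemma WSx i x : w0 (s i x) = s i (w0 x). Proof. exact: (WS i x). Qed.
Lemma RPx x : r (p x) = p (r x). Proof. exact: (RP x). Qed.
Lemma WPx x : w0 (p x) = p (w0 x). Proof. exact: (WP x). Qed.
Lemma PS0 x : p (s i0 x) = s i1 (p x). Proof. by rewrite PSx i01. Qed.
Lemma PS1 x : p (s i1 x) = s i2 (p x). Proof. by rewrite PSx i12. Qed.
Lemma PS2 x : p (s i2 x) = s i0 (p x). Proof. by rewrite PSx i20. Qed.
Lemma BR0 x : s i0 (s i1 (s i0 x)) = s i1 (s i0 (s i1 x)).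
Proof. by have := BR i0 x; rewrite /= i01. Qed.
Lemma BR1 x : s i1 (s i2 (s i1 x)) = s i2 (s i1 (s i2 x)).
Proof. by have := BR i1 x; rewrite /= i12. Qed.
Lemma PiS0 x : pinv (s i0 x) = s i2 (pinv x).
Proof. by apply: (can_inj pK); rewrite pKV PS2 pKV. Qed.
Lemma PiS1 x : pinv (s i1 x) = s i0 (pinv x).
Proof. by apply: (can_inj pK); rewrite pKV PS0 pKV. Qed.
Lemma PiS2 x : pinv (s i2 x) = s i1 (pinv x).
Proof. by apply: (can_inj pK); rewrite pKV PS1 pKV. Qed.
Lemma Pita j : pinv (ta (j + 1)) = ta j. Proof. by rewrite -pta pK. Qed.
Lemma Pitb j : pinv (tb (j + 1)) = tb j. Proof. by rewrite -ptb pK. Qed.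
Lemma Pita1 : pinv (ta i1) = ta i0. Proof. by rewrite -i01 Pita. Qed.
Lemma Pita2 : pinv (ta i2) = ta i1. Proof. by rewrite -i12 Pita. Qed.
Lemma Pita0 : pinv (ta i0) = ta i2. Proof. by rewrite -i20 Pita. Qed.
Lemma Pitb1 : pinv (tb i1) = tb i0. Proof. by rewrite -i01 Pitb. Qed.
Lemma Pitb2 : pinv (tb i2) = tb i1. Proof. by rewrite -i12 Pitb. Qed.
Lemma Pitb0 : pinv (tb i0) = tb i2. Proof. by rewrite -i20 Pitb. Qed.

Definition T1 x := p (s i2 (s i1 x)).
Definition T1i x := si i1 (si i2 (pinv x)).
Definition T2 x := s i1 (p (s i2 x)).
Definition T2i x := si i2 (pinv (si i1 x)).
Definition T4 x := r (w0 x).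
Definition T4i x := w0inv (rinv x).

Lemma T1K : cancel T1 T1i. Proof. by move=> x; rewrite /T1 /T1i pK !sK. Qed.
Lemma T1KV : cancel T1i T1. Proof. by move=> x; rewrite /T1 /T1i !sKV pKV. Qed.
Lemma T2K : cancel T2 T2i. Proof. by move=> x; rewrite /T2 /T2i sK pK sK. Qed.
Lemma T2KV : cancel T2i T2. Proof. by move=> x; rewrite /T2 /T2i sKV pKV sKV. Qed.
Lemma T4K : cancel T4 T4i. Proof. by move=> x; rewrite /T4 /T4i rK wK. Qed.
Lemma T4KV : cancel T4i T4. Proof. by move=> x; rewrite /T4 /T4i wKV rKV. Qed.

Lemma T12 x : T1 (T2 x) = T2 (T1 x).
Proof.
rewrite /T1 /T2 S2x.
do 4 rewrite ?PS0 ?PS1 ?PS2.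
by rewrite -BR0 S2x.
Qed.
Lemma T14 x : T1 (T4 x) = T4 (T1 x).
Proof. rewrite /T1 /T4. by do 4 rewrite -?RSx -?RPx -?WSx -?WPx. Qed.
Lemma T24 x : T2 (T4 x) = T4 (T2 x).
Proof. rewrite /T2 /T4. by do 4 rewrite -?RSx -?RPx -?WSx -?WPx. Qed.

Definition M a b c x := pz T1 T1i a (pz T2 T2i b (pz T4 T4i c x)).

Lemma M_comp a b c a' b' c' x :
  M a b c (M a' b' c' x) = M (a + a') (b + b') (c + c') x.
Proof.
rewrite /M (pz_comm T4K T4KV T1K T1KV (fun y => esym (T14 y))).
rewrite (pz_comm T4K T4KV T2K T2KV (fun y => esym (T24 y))).
rewrite (pz_comm T2K T2KV T1K T1KV (fun y => esym (T12 y))).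
by rewrite (pz_add T1K T1KV) (pz_add T2K T2KV) (pz_add T4K T4KV).
Qed.

Lemma RT1 : RM T1.
Proof. exact: (RM_comp (RM_rm p) (RM_comp (RM_rm (s i2)) (RM_rm (s i1)))). Qed.
Lemma RT2 : RM T2.
Proof. exact: (RM_comp (RM_rm (s i1)) (RM_comp (RM_rm p) (RM_rm (s i2)))). Qed.
Lemma RT4 : RM T4.
Proof. exact: (RM_comp (RM_rm r) (RM_rm w0)). Qed.
Lemma RMM a b c : RM (M a b c).
Proof.
exact: (RM_comp (RM_pz a T1K T1KV RT1)
  (RM_comp (RM_pz b T2K T2KV RT2) (RM_pz c T4K T4KV RT4))).
Qed.

Definition sNE := (sa_n n01, sa_n n02, sa_n n10, sa_n n12, sa_n n20, sa_n n21,
  sta_n n01, sta_n n02, sta_n n10, sta_n n12, sta_n n20, sta_n n21,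
  stb_n n01, stb_n n02, stb_n n10, stb_n n12, stb_n n20, stb_n n21).
Ltac csimp := do ?[ progress push | progress rewrite ?iE
  | progress rewrite ?sQ ?sg ?pQ ?pg ?wQ ?wg ?rQ ?rg ?pa ?pta ?ptb ?wa ?wta ?ra ?rta ?rtb
  | progress rewrite ?sa_d | progress rewrite ?sNE ].

Lemma alQ0 : al i0 * al i1 * al i2 = Q. Proof. by rewrite -(alQ i0) !iE. Qed.
Lemma T1Q : T1 Q = Q. Proof. by rewrite /T1; csimp. Qed.
Lemma T2Q : T2 Q = Q. Proof. by rewrite /T2; csimp. Qed.
Lemma T4Q : T4 Q = Q. Proof. by rewrite /T4; csimp. Qed.
Lemma T1g : T1 g = g. Proof. by rewrite /T1; csimp. Qed.
Lemma T2g : T2 g = g. Proof. by rewrite /T2; csimp. Qed.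
Lemma T4g : T4 g = Q * g. Proof. by rewrite /T4; csimp; rewrite invfM !invrK. Qed.
Lemma T4a j : T4 (al j) = al j. Proof. by rewrite /T4; csimp. Qed.
Lemma T1a0 : T1 (al i0) = Q * al i0.
Proof. rewrite /T1; csimp; rewrite -alQ0; ring. Qed.
Lemma T1a1 : T1 (al i1) = Q^-1 * al i1.
Proof. rewrite /T1; csimp; rewrite -alQ0; field; rewrite ?(Q_nz, g_nz, al_nz, ta_nz, tb_nz) //. Qed.
Lemma T1a2 : T1 (al i2) = al i2.
Proof. rewrite /T1; csimp; field; rewrite ?(Q_nz, g_nz, al_nz, ta_nz, tb_nz) //. Qed.
Lemma T2a0 : T2 (al i0) = al i0.
Proof. rewrite /T2; csimp; field; rewrite ?(Q_nz, g_nz, al_nz, ta_nz, tb_nz) //. Qed.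
Lemma T2a1 : T2 (al i1) = Q * al i1.
Proof. rewrite /T2; csimp; rewrite -alQ0; ring. Qed.
Lemma T2a2 : T2 (al i2) = Q^-1 * al i2.
Proof. rewrite /T2; csimp; rewrite -alQ0; field; rewrite ?(Q_nz, g_nz, al_nz, ta_nz, tb_nz) //. Qed.

Lemma P1R a : RM (pz T1 T1i a). Proof. exact: RM_pz a T1K T1KV RT1. Qed.
Lemma P2R a : RM (pz T2 T2i a). Proof. exact: RM_pz a T2K T2KV RT2. Qed.
Lemma T1Qi : T1 Q^-1 = Q^-1. Proof. by rewrite (RM_V RT1) T1Q. Qed.
Lemma T2Qi : T2 Q^-1 = Q^-1. Proof. by rewrite (RM_V RT2) T2Q. Qed.
Lemma Qi0 : Q^-1 != 0. Proof. by rewrite invr_eq0. Qed.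

Lemma M_Q a b c : M a b c Q = Q.
Proof. by rewrite /M (pz_fix T4K T4KV T4Q) (pz_fix T2K T2KV T2Q) (pz_fix T1K T1KV T1Q). Qed.
Lemma M_g a b c : M a b c g = Q ^ c * g.
Proof.
rewrite /M (pz_scale T4K T4KV RT4 Q_nz T4Q T4g).
rewrite (RM_M (P2R b)) (RM_Xz (P2R b)) (pz_fix T2K T2KV T2Q) (pz_fix T2K T2KV T2g).
by rewrite (RM_M (P1R a)) (RM_Xz (P1R a)) (pz_fix T1K T1KV T1Q) (pz_fix T1K T1KV T1g).
Qed.
Lemma M_a0 a b c : M a b c (al i0) = Q ^ a * al i0.
Proof.
rewrite /M (pz_fix T4K T4KV (T4a i0)) (pz_fix T2K T2KV T2a0).
by rewrite (pz_scale T1K T1KV RT1 Q_nz T1Q T1a0).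
Qed.
Lemma M_a1 a b c : M a b c (al i1) = Q ^ (b - a) * al i1.
Proof.
rewrite /M (pz_fix T4K T4KV (T4a i1)) (pz_scale T2K T2KV RT2 Q_nz T2Q T2a1).
rewrite (RM_M (P1R a)) (RM_Xz (P1R a)) (pz_fix T1K T1KV T1Q).
rewrite (pz_scale T1K T1KV RT1 Qi0 T1Qi T1a1) exprz_inv mulrA -expfzDr //.
Qed.
Lemma M_a2 a b c : M a b c (al i2) = Q ^ (- b) * al i2.
Proof.
rewrite /M (pz_fix T4K T4KV (T4a i2)) (pz_scale T2K T2KV RT2 Qi0 T2Qi T2a2).
rewrite (RM_M (P1R a)) (RM_Xz (P1R a)) (pz_fix T1K T1KV T1Qi) (pz_fix T1K T1KV T1a2).
by rewrite exprz_inv.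
Qed.

Ltac vsimp := rewrite /M /pz /= /T1 /T1i /T2 /T2i /T4 ?si_s;
  do ?[ progress rewrite ?PiS0 ?PiS1 ?PiS2 ?Pita0 ?Pita1 ?Pita2 ?Pitb0 ?Pitb1 ?Pitb2
      | progress rewrite ?S2x | progress rewrite ?sNE | progress rewrite ?wta ?rta ?pta ?ptb ?iE ].

Lemma V000 : M 0 0 0 (ta i1) = ta i1. Proof. by []. Qed.
Lemma V001 : M 0 0 1 (ta i1) = tb i1. Proof. by vsimp. Qed.
Lemma Vm00 : M (-1) 0 0 (ta i1) = ta i0. Proof. by vsimp. Qed.
Lemma Vm01 : M (-1) 0 1 (ta i1) = tb i0. Proof. by vsimp. Qed.
Lemma V010 : M 0 1 0 (ta i1) = ta i2. Proof. by vsimp. Qed.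
Lemma V011 : M 0 1 1 (ta i1) = tb i2. Proof. by vsimp. Qed.
Lemma Vm10 : M (-1) 1 0 (ta i1) = s i1 (ta i1). Proof. by vsimp. Qed.
Lemma Vm11 : M (-1) 1 1 (ta i1) = s i1 (tb i1). Proof. by vsimp. Qed.
Lemma V110 : M 1 1 0 (ta i1) = s i0 (ta i0). Proof. by vsimp; rewrite PS2 pta i20. Qed.
Lemma V111 : M 1 1 1 (ta i1) = s i0 (tb i0). Proof. by vsimp; rewrite PS2 ptb i20. Qed.
Lemma Vmm0 : M (-1) (-1) 0 (ta i1) = s i2 (ta i2).
Proof. by vsimp; rewrite BR1 S2x sNE. Qed.
Lemma Vmm1 : M (-1) (-1) 1 (ta i1) = s i2 (tb i2).
Proof. by vsimp; rewrite BR1 S2x sNE. Qed.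

Local Notation t1 := (ta i1).
Ltac bfin := rewrite ?expr1z ?exprN1 -?invr_expz -?exprnP; field;
  rewrite ?(Q_nz, g_nz, al_nz, ta_nz, tb_nz) //.

Lemma E1b : M (-1) 0 1 t1 * M 0 1 0 t1
  - Q ^ 1 * g ^+ 2 * al i1 ^+ 3 * M 0 0 0 t1 * M (-1) 1 1 t1
  + Q ^ 2 * g ^+ 4 * al i1 ^+ 6 * M (-1) 0 0 t1 * M 0 1 1 t1 = 0.
Proof. rewrite Vm01 V010 V000 Vm11 Vm00 V011 stb_d !iE; bfin. Qed.
Lemma E2b : M 0 0 1 t1 * M (-1) 0 0 t1
  - Q ^ 1 * g ^+ 2 * al i2 ^+ 3 * M 0 1 0 t1 * M (-1) (-1) 1 t1
  + Q ^ 2 * g ^+ 4 * al i2 ^+ 6 * M 0 0 0 t1 * M (-1) 0 1 t1 = 0.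
Proof. rewrite V001 Vm00 V010 Vmm1 V000 Vm01 stb_d !iE; bfin. Qed.
Lemma E3b : M 0 1 1 t1 * M 0 0 0 t1
  - Q ^ 1 * g ^+ 2 * al i0 ^+ 3 * M (-1) 0 0 t1 * M 1 1 1 t1
  + Q ^ 2 * g ^+ 4 * al i0 ^+ 6 * M 0 1 0 t1 * M 0 0 1 t1 = 0.
Proof. rewrite V011 V000 Vm00 V111 V010 V001 stb_d !iE; bfin. Qed.
Lemma E4b : M 0 1 1 t1 * M (-1) 0 0 t1
  - Q ^ (-1) * g ^- 2 * al i1 ^+ 3 * M 0 0 1 t1 * M (-1) 1 0 t1
  + Q ^ (-2) * g ^- 4 * al i1 ^+ 6 * M 0 1 0 t1 * M (-1) 0 1 t1 = 0.
Proof. rewrite V011 Vm00 V001 Vm10 V010 Vm01 sta_d !iE; bfin. Qed.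
Lemma E5b : M (-1) 0 1 t1 * M 0 0 0 t1
  - Q ^ (-1) * g ^- 2 * al i2 ^+ 3 * M 0 1 1 t1 * M (-1) (-1) 0 t1
  + Q ^ (-2) * g ^- 4 * al i2 ^+ 6 * M (-1) 0 0 t1 * M 0 0 1 t1 = 0.
Proof. rewrite Vm01 V000 V011 Vmm0 Vm00 V001 sta_d !iE; bfin. Qed.
Lemma E6b : M 0 0 1 t1 * M 0 1 0 t1
  - Q ^ (-1) * g ^- 2 * al i0 ^+ 3 * M (-1) 0 1 t1 * M 1 1 0 t1
  + Q ^ (-2) * g ^- 4 * al i0 ^+ 6 * M 0 0 0 t1 * M 0 1 1 t1 = 0.
Proof. rewrite V001 V010 Vm01 V110 V000 V011 sta_d !iE; bfin. Qed.

Definition tA n m N := M n m N t1.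

Ltac gpush H n m N :=
  let R := constr:(RMM (n + 1) m N) in
  rewrite (RM_0 R) in H;
  do ?[ progress rewrite ?(RM_D R) ?(RM_B R) ?(RM_N R) in H
      | progress rewrite ?(RM_Xz R) ?(RM_X R) ?(RM_V R) in H
      | progress rewrite ?(RM_M R) in H ];
  rewrite ?M_comp ?M_Q ?M_g ?M_a0 ?M_a1 ?M_a2 in H.
Lemma add11 (n : int) : n + 1 + 1 = n + 2. Proof. by rewrite -addrA. Qed.
Ltac inorm H n := rewrite ?addr0 ?addrK ?add11 in H.

Lemma mainA (n m N : int) :
  let t := tA in
  let a0 := al i0 in let a1 := al i1 in let a2 := al i2 in
  (t n m (N + 1) * t (n + 1) (m + 1) N
      - Q ^ (- 3 * n + 3 * m + 2 * N - 2) * g ^+ 2 * a1 ^+ 3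
          * t (n + 1) m N * t n (m + 1) (N + 1)
      + Q ^ (- 6 * n + 6 * m + 4 * N - 4) * g ^+ 4 * a1 ^+ 6
          * t n m N * t (n + 1) (m + 1) (N + 1) = 0) /\
    (    t (n + 1) m (N + 1) * t n m N
      - Q ^ (- 3 * m + 2 * N + 1) * g ^+ 2 * a2 ^+ 3
          * t (n + 1) (m + 1) N * t n (m - 1) (N + 1)
      + Q ^ (- 6 * m + 4 * N + 2) * g ^+ 4 * a2 ^+ 6
          * t (n + 1) m N * t n m (N + 1) = 0) /\
    (    t (n + 1) (m + 1) (N + 1) * t (n + 1) m N
      - Q ^ (3 * n + 2 * N + 4) * g ^+ 2 * a0 ^+ 3
          * t n m N * t (n + 2) (m + 1) (N + 1)
      + Q ^ (6 * n + 4 * N + 8) * g ^+ 4 * a0 ^+ 6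
          * t (n + 1) (m + 1) N * t (n + 1) m (N + 1) = 0) /\
    (    t (n + 1) (m + 1) (N + 1) * t n m N
      - Q ^ (- 3 * n + 3 * m - 2 * N - 4) * g ^- 2 * a1 ^+ 3
          * t (n + 1) m (N + 1) * t n (m + 1) N
      + Q ^ (- 6 * n + 6 * m - 4 * N - 8) * g ^- 4 * a1 ^+ 6
          * t (n + 1) (m + 1) N * t n m (N + 1) = 0) /\
    (    t n m (N + 1) * t (n + 1) m N
      - Q ^ (- 3 * m - 2 * N - 1) * g ^- 2 * a2 ^+ 3
          * t (n + 1) (m + 1) (N + 1) * t n (m - 1) N
      + Q ^ (- 6 * m - 4 * N - 2) * g ^- 4 * a2 ^+ 6
          * t n m N * t (n + 1) m (N + 1) = 0) /\
    (t (n + 1) m (N + 1) * t (n + 1) (m + 1) N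
      - Q ^ (3 * n - 2 * N + 2) * g ^- 2 * a0 ^+ 3
          * t n m (N + 1) * t (n + 2) (m + 1) N
      + Q ^ (6 * n - 4 * N + 4) * g ^- 4 * a0 ^+ 6
          * t (n + 1) m N * t (n + 1) (m + 1) (N + 1) = 0).
Proof.
move=> t a0 a1 a2; rewrite /t /tA /a0 /a1 /a2.
split; last split; last split; last split; last split.
- have H := congr1 (M (n + 1) m N) E1b; gpush H n m N.
  have C1 : Q ^ 1 * (Q ^ N * g) ^+ 2 * (Q ^ (m - (n + 1)) * al i1) ^+ 3
    = Q ^ (- 3 * n + 3 * m + 2 * N - 2) * g ^+ 2 * al i1 ^+ 3 by apply: coefA23 => //; ring.
  have C2 : Q ^ 2 * (Q ^ N * g) ^+ 4 * (Q ^ (m - (n + 1)) * al i1) ^+ 6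
    = Q ^ (- 6 * n + 6 * m + 4 * N - 4) * g ^+ 4 * al i1 ^+ 6 by apply: coefA46 => //; ring.
  rewrite C1 C2 in H; inorm H n.
  exact: H.
- have H := congr1 (M (n + 1) m N) E2b; gpush H n m N.
  have C1 : Q ^ 1 * (Q ^ N * g) ^+ 2 * (Q ^ (- m) * al i2) ^+ 3
    = Q ^ (- 3 * m + 2 * N + 1) * g ^+ 2 * al i2 ^+ 3 by apply: coefA23 => //; ring.
  have C2 : Q ^ 2 * (Q ^ N * g) ^+ 4 * (Q ^ (- m) * al i2) ^+ 6
    = Q ^ (- 6 * m + 4 * N + 2) * g ^+ 4 * al i2 ^+ 6 by apply: coefA46 => //; ring.
  rewrite C1 C2 in H; inorm H n.
  exact: H.
- have H := congr1 (M (n + 1) m N) E3b; gpush H n m N.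
  have C1 : Q ^ 1 * (Q ^ N * g) ^+ 2 * (Q ^ (n + 1) * al i0) ^+ 3
    = Q ^ (3 * n + 2 * N + 4) * g ^+ 2 * al i0 ^+ 3 by apply: coefA23 => //; ring.
  have C2 : Q ^ 2 * (Q ^ N * g) ^+ 4 * (Q ^ (n + 1) * al i0) ^+ 6
    = Q ^ (6 * n + 4 * N + 8) * g ^+ 4 * al i0 ^+ 6 by apply: coefA46 => //; ring.
  rewrite C1 C2 in H; inorm H n.
  exact: H.
- have H := congr1 (M (n + 1) m N) E4b; gpush H n m N.
  have C1 : Q ^ (-1) * ((Q ^ N * g) ^+ 2)^-1 * (Q ^ (m - (n + 1)) * al i1) ^+ 3
    = Q ^ (- 3 * n + 3 * m - 2 * N - 4) * g ^- 2 * al i1 ^+ 3 by apply: coefB23 => //; ring.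
  have C2 : Q ^ (-2) * ((Q ^ N * g) ^+ 4)^-1 * (Q ^ (m - (n + 1)) * al i1) ^+ 6
    = Q ^ (- 6 * n + 6 * m - 4 * N - 8) * g ^- 4 * al i1 ^+ 6 by apply: coefB46 => //; ring.
  rewrite C1 C2 in H; inorm H n.
  exact: H.
- have H := congr1 (M (n + 1) m N) E5b; gpush H n m N.
  have C1 : Q ^ (-1) * ((Q ^ N * g) ^+ 2)^-1 * (Q ^ (- m) * al i2) ^+ 3
    = Q ^ (- 3 * m - 2 * N - 1) * g ^- 2 * al i2 ^+ 3 by apply: coefB23 => //; ring.
  have C2 : Q ^ (-2) * ((Q ^ N * g) ^+ 4)^-1 * (Q ^ (- m) * al i2) ^+ 6
    = Q ^ (- 6 * m - 4 * N - 2) * g ^- 4 * al i2 ^+ 6 by apply: coefB46 => //; ring.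
  rewrite C1 C2 in H; inorm H n.
  exact: H.
- have H := congr1 (M (n + 1) m N) E6b; gpush H n m N.
  have C1 : Q ^ (-1) * ((Q ^ N * g) ^+ 2)^-1 * (Q ^ (n + 1) * al i0) ^+ 3
    = Q ^ (3 * n - 2 * N + 2) * g ^- 2 * al i0 ^+ 3 by apply: coefB23 => //; ring.
  have C2 : Q ^ (-2) * ((Q ^ N * g) ^+ 4)^-1 * (Q ^ (n + 1) * al i0) ^+ 6
    = Q ^ (6 * n - 4 * N + 4) * g ^- 4 * al i0 ^+ 6 by apply: coefB46 => //; ring.
  rewrite C1 C2 in H; inorm H n.
  exact: H.
Qed.
End Abs.
Lemma frac_decomp (R : idomainType) (x : {fraction R}) :
  exists a b : R, b != 0 /\ x = tofrac a / tofrac b.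
Proof.
elim/quotW: x => y; exists \n_y, \d_y; split; first exact: denom_ratioP.
apply: (@mulIf _ (tofrac \d_y)); first by rewrite tofrac_eq0 denom_ratioP.
rewrite mulfVK ?tofrac_eq0 ?denom_ratioP //.
unlock tofrac.
rewrite /GRing.mul /= !piE.
apply/eqmodP.
rewrite /= FracField.equivfE /FracField.mulf !numden_Ratio ?mulf_neq0 ?oner_neq0 ?denom_ratioP //.
by rewrite !mulr1 mulrC.
Qed.

Section Ext.
Variable C : numClosedFieldType.
Local Notation KK := (K C).

Lemma Gen_val (i : 'I_10) : Gen C i = tofrac ('X_i : {mpoly C[10]}).
Proof. by rewrite /Gen inord_val. Qed.

Lemma morph_ext (f g : {rmorphism KK -> KK}) :
  (forall c, f (cst c) = g (cst c)) ->
  (forall k : 'I_10, f (Gen C k) = g (Gen C k)) -> f =1 g.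
Proof.
move=> hc hk.
have hp : forall a : {mpoly C[10]}, f (tofrac a) = g (tofrac a).
  elim/mpolyind => [|c m a _ _ IH]; first by rewrite !rmorph0.
  rewrite !rmorphD IH; congr (_ + _).
  rewrite -mul_mpolyC mpolyXE_id !rmorphM rmorph_prod.
  have := hc c; rewrite /cst => ->; congr (_ * _).
  rewrite !rmorph_prod; apply: eq_bigr => i _.
  rewrite !rmorphXn; have := hk i; rewrite Gen_val => ->. done.
move=> x; have [a [b [_ ->]]] := @frac_decomp _ x.
by rewrite !fmorph_div !hp.
Qed.

End Ext.
Lemma alQa (F : fieldType) (x y q : F) : x != 0 -> y != 0 -> x * y * (q / (x * y)) = q.
Proof. by move=> hx hy; field; rewrite hx hy. Qed.
Lemma alQb (F : fieldType) (x y q : F) : x != 0 -> y != 0 -> y * (q / (x * y)) * x = q.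
Proof. by move=> hx hy; field; rewrite hx hy. Qed.
Lemma alQc (F : fieldType) (x y q : F) : x != 0 -> y != 0 -> q / (x * y) * x * y = q.
Proof. by move=> hx hy; field; rewrite hx hy. Qed.

Section Conc.
Variable C : numClosedFieldType.
Local Notation KK := (K C).
Local Notation Q := (Qv C).
Local Notation g := (gam C).
Local Notation al := (alpha C).
Local Notation ta := (tau C).
Local Notation tb := (taub C).

Lemma Gen_neq0 k : (k < 10)%N -> Gen C k != 0.
Proof.
move=> hk; rewrite /Gen tofrac_eq0; apply/eqP => h.
have := @mcoeffXU 10 C (inord k) (inord k).
by rewrite h mcoeff0 eqxx => /eqP; rewrite eq_sym oner_eq0.
Qed.
Lemma cQ_neq0 : Q != 0. Proof. exact: Gen_neq0. Qed.
Lemma cg_neq0 : g != 0. Proof. exact: Gen_neq0. Qed.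
Lemma cta_neq0 j : ta j != 0. Proof. by apply: Gen_neq0; case: j => [[|[|[|//]]] ?]. Qed.
Lemma ctb_neq0 j : tb j != 0. Proof. by apply: Gen_neq0; case: j => [[|[|[|//]]] ?]. Qed.
Lemma cal_neq0 j : al j != 0.
Proof.
rewrite /alpha; case: ifP => _; first exact: Gen_neq0.
case: ifP => _; first exact: Gen_neq0.
by rewrite mulf_neq0 ?invr_eq0 ?mulf_neq0 ?Gen_neq0 ?cQ_neq0.
Qed.

Lemma vinord k : (k < 3)%N -> val (inord k : 'I_3) = k. Proof. exact: inordK. Qed.
Lemma al0 : al (inord 0) = Gen C 1. Proof. by rewrite /alpha vinord. Qed.
Lemma al1 : al (inord 1) = Gen C 2. Proof. by rewrite /alpha vinord. Qed.
Lemma al2 : al (inord 2) = Q / (Gen C 1 * Gen C 2). Proof. by rewrite /alpha vinord. Qed.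
Lemma o_cases (i : 'I_3) : [\/ i = inord 0, i = inord 1 | i = inord 2].
Proof.
by case: i => [[|[|[|//]]] ?]; [apply: Or31|apply: Or32|apply: Or33]; apply: val_inj; rewrite /= inordK.
Qed.
Lemma o01 : (inord 0 : 'I_3) + 1 = inord 1. Proof. by apply: val_inj; rewrite /= !inordK. Qed.
Lemma o02 : (inord 0 : 'I_3) + 2 = inord 2. Proof. by apply: val_inj; rewrite /= !inordK. Qed.
Lemma o11 : (inord 1 : 'I_3) + 1 = inord 2. Proof. by apply: val_inj; rewrite /= !inordK. Qed.
Lemma o12 : (inord 1 : 'I_3) + 2 = inord 0. Proof. by apply: val_inj; rewrite /= !inordK. Qed.
Lemma o21 : (inord 2 : 'I_3) + 1 = inord 0. Proof. by apply: val_inj; rewrite /= !inordK. Qed.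
Lemma o22 : (inord 2 : 'I_3) + 2 = inord 1. Proof. by apply: val_inj; rewrite /= !inordK. Qed.

Lemma calQ i : al i * al (i + 1) * al (i + 2) = Q.
Proof.
have h1 : Gen C 1 != 0 by exact: Gen_neq0.
have h2 : Gen C 2 != 0 by exact: Gen_neq0.
have h12 : Gen C 1 * Gen C 2 != 0 := mulf_neq0 h1 h2.
case: (o_cases i) => ->; rewrite ?o01 ?o02 ?o11 ?o12 ?o21 ?o22 al0 al1 al2.
- exact: (alQa _ h1 h2).
- exact: (alQb _ h1 h2).
- exact: (alQc _ h1 h2).
Qed.

Definition isCK (x : KK) := exists c, x = cst c.

Lemma cext (f h : {rmorphism KK -> KK}) :
  (forall c, isCK c -> f c = h c) -> f Q = h Q -> f g = h g ->
  (forall j, f (al j) = h (al j)) -> (forall j, f (ta j) = h (ta j)) ->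
  (forall j, f (tb j) = h (tb j)) -> f =1 h.
Proof.
move=> hc hQ hg ha hta htb; apply: morph_ext => [c|k]; first by apply: hc; exists c.
case: k => k hk; change (f (Gen C k) = h (Gen C k)).
case: k hk => [|[|[|[|[|[|[|[|[|[|//]]]]]]]]]] _.
- exact: hQ.
- by have := ha (inord 0); rewrite /alpha vinord.
- by have := ha (inord 1); rewrite /alpha vinord.
- exact: hg.
- by have := hta (inord 0); rewrite /tau vinord.
- by have := hta (inord 1); rewrite /tau vinord.
- by have := hta (inord 2); rewrite /tau vinord.
- by have := htb (inord 0); rewrite /taub vinord.
- by have := htb (inord 1); rewrite /taub vinord.
- by have := htb (inord 2); rewrite /taub vinord.
Qed.
End Conc.

Section Spec.
Variable C : numClosedFieldType.
Local Notation KK := (K C).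

Lemma autK1 (f : {rmorphism KK -> KK}) finv : autK f finv -> cancel f finv.
Proof. by case. Qed.
Lemma autK2 (f : {rmorphism KK -> KK}) finv : autK f finv -> cancel finv f.
Proof. by case. Qed.
Lemma autKC (f : {rmorphism KK -> KK}) finv : autK f finv -> forall c, isCK c -> f c = c.
Proof. move=> [_ _ h] c [c' ->]; exact: h. Qed.

Variable s : {rmorphism KK -> KK}.
Variable i : 'I_3.
Hypothesis hs : sB6_spec s i.
Lemma ssQ : s (Qv C) = Qv C. Proof. by case: hs => [[]]. Qed.
Lemma ssg : s (gam C) = gam C. Proof. by case: hs => [[]]. Qed.
Lemma ssa_d : s (alpha C i) = (alpha C i)^-1. Proof. by case: hs => [[]]. Qed.
Lemma ssa_n j : j != i -> s (alpha C j) = alpha C j * alpha C i.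
Proof. by case: hs => [[_ _ _ h] _]; apply: h. Qed.
Lemma ssta_d : s (tau C i) = ((Qv C) ^- 2 * (gam C) ^- 4 * alpha C i ^+ 6 * tau C (i+1) * taub C (i+2)
   + taub C (i+1) * tau C (i+2)) / ((Qv C)^-1 * (gam C) ^- 2 * alpha C i ^+ 3 * taub C i).
Proof. by case: hs => [_ [-> _ _]]; rewrite I3_m1. Qed.
Lemma sstb_d : s (taub C i) = ((Qv C) ^+ 2 * (gam C) ^+ 4 * alpha C i ^+ 6 * taub C (i+1) * tau C (i+2)
   + tau C (i+1) * taub C (i+2)) / (Qv C * (gam C) ^+ 2 * alpha C i ^+ 3 * tau C i).
Proof. by case: hs => [_ [_ -> _]]; rewrite I3_m1. Qed.
Lemma ssta_n j : j != i -> s (tau C j) = tau C j.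
Proof. by case: hs => [_ [_ _ h]] /h []. Qed.
Lemma sstb_n j : j != i -> s (taub C j) = taub C j.
Proof. by case: hs => [_ [_ _ h]] /h []. Qed.
End Spec.

Section Spec2.
Variable C : numClosedFieldType.
Local Notation KK := (K C).
Variable p : {rmorphism KK -> KK}.
Hypothesis hp : piB6_spec p.
Lemma ppQ : p (Qv C) = Qv C. Proof. by case: hp. Qed.
Lemma ppg : p (gam C) = gam C. Proof. by case: hp. Qed.
Lemma ppa j : p (alpha C j) = alpha C (j + 1). Proof. by case: hp => _ _ h _ _; apply: h. Qed.
Lemma ppta j : p (tau C j) = tau C (j + 1). Proof. by case: hp => _ _ _ h _; apply: h. Qed.
Lemma pptb j : p (taub C j) = taub C (j + 1). Proof. by case: hp => _ _ _ _ h; apply: h. Qed.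

Variable w : {rmorphism KK -> KK}.
Hypothesis hw : w0B6_spec w.
Lemma wwQ : w (Qv C) = Qv C. Proof. by case: hw. Qed.
Lemma wwa j : w (alpha C j) = alpha C j. Proof. by case: hw => _ h _ _ _; apply: h. Qed.
Lemma wwg : w (gam C) = (gam C)^-1. Proof. by case: hw. Qed.
Lemma wwta j : w (tau C j) = tau C j. Proof. by case: hw => _ _ _ h _; apply: h. Qed.
Lemma wwtb i0 : w (taub C i0) = alpha C (i0+1) ^+ 2 * (taub C i0 * tau C (i0+1) * tau C (i0+2)
      + (Qv C) ^- 2 * (gam C) ^- 4 * alpha C (i0+2) ^+ 6 * tau C i0 * taub C (i0+1) * tau C (i0+2)
      + ((Qv C) ^- 2 * (gam C) ^- 4 * alpha C (i0+1) ^+ 6)^-1 * tau C i0 * tau C (i0+1) * taub C (i0+2))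
      / (alpha C (i0+2) ^+ 2 * taub C (i0+1) * taub C (i0+2)).
Proof. by case: hw => _ _ _ _ ->; rewrite I3_m1. Qed.

Variable r : {rmorphism KK -> KK}.
Hypothesis hr : rB6_spec r.
Lemma rrQ : r (Qv C) = Qv C. Proof. by case: hr. Qed.
Lemma rra j : r (alpha C j) = alpha C j. Proof. by case: hr => _ h _ _ _; apply: h. Qed.
Lemma rrg : r (gam C) = (Qv C)^-1 * (gam C)^-1. Proof. by case: hr. Qed.
Lemma rrta j : r (tau C j) = taub C j. Proof. by case: hr => _ _ _ h _; apply: h. Qed.
Lemma rrtb j : r (taub C j) = tau C j. Proof. by case: hr => _ _ _ _ h; apply: h. Qed.
End Spec2.

Theorem propositionB6 (C : numClosedFieldType)
    (s : 'I_3 -> {rmorphism K C -> K C}) (si : 'I_3 -> K C -> K C)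
    (p : {rmorphism K C -> K C}) (pinv : K C -> K C)
    (w0 : {rmorphism K C -> K C}) (w0inv : K C -> K C)
    (w1 : {rmorphism K C -> K C}) (w1inv : K C -> K C)
    (r : {rmorphism K C -> K C}) (rinv : K C -> K C) :
  (forall i, autK (s i) (si i)) -> (forall i, sB6_spec (s i) i) ->
  autK p pinv -> piB6_spec p ->
  autK w0 w0inv -> w0B6_spec w0 ->
  autK w1 w1inv -> w1B6_spec w1 ->
  autK r rinv -> rB6_spec r ->
  let t := tauNM s si p pinv w0 w0inv r rinv in
  let Q := Qv C in let g := gam C in
  let a0 := alpha C (inord 0) in let a1 := alpha C (inord 1) in
  let a2 := alpha C (inord 2) in
  forall n m N : int,
  (t n m (N + 1) * t (n + 1) (m + 1) N
      - Q ^ (- 3 * n + 3 * m + 2 * N - 2) * g ^+ 2 * a1 ^+ 3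
          * t (n + 1) m N * t n (m + 1) (N + 1)
      + Q ^ (- 6 * n + 6 * m + 4 * N - 4) * g ^+ 4 * a1 ^+ 6
          * t n m N * t (n + 1) (m + 1) (N + 1) = 0) /\
    (    t (n + 1) m (N + 1) * t n m N
      - Q ^ (- 3 * m + 2 * N + 1) * g ^+ 2 * a2 ^+ 3
          * t (n + 1) (m + 1) N * t n (m - 1) (N + 1)
      + Q ^ (- 6 * m + 4 * N + 2) * g ^+ 4 * a2 ^+ 6
          * t (n + 1) m N * t n m (N + 1) = 0) /\
    (    t (n + 1) (m + 1) (N + 1) * t (n + 1) m N
      - Q ^ (3 * n + 2 * N + 4) * g ^+ 2 * a0 ^+ 3
          * t n m N * t (n + 2) (m + 1) (N + 1)
      + Q ^ (6 * n + 4 * N + 8) * g ^+ 4 * a0 ^+ 6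
          * t (n + 1) (m + 1) N * t (n + 1) m (N + 1) = 0) /\
    (    t (n + 1) (m + 1) (N + 1) * t n m N
      - Q ^ (- 3 * n + 3 * m - 2 * N - 4) * g ^- 2 * a1 ^+ 3
          * t (n + 1) m (N + 1) * t n (m + 1) N
      + Q ^ (- 6 * n + 6 * m - 4 * N - 8) * g ^- 4 * a1 ^+ 6
          * t (n + 1) (m + 1) N * t n m (N + 1) = 0) /\
    (    t n m (N + 1) * t (n + 1) m N
      - Q ^ (- 3 * m - 2 * N - 1) * g ^- 2 * a2 ^+ 3
          * t (n + 1) (m + 1) (N + 1) * t n (m - 1) N
      + Q ^ (- 6 * m - 4 * N - 2) * g ^- 4 * a2 ^+ 6
          * t n m N * t (n + 1) m (N + 1) = 0) /\
    (t (n + 1) m (N + 1) * t (n + 1) (m + 1) N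
      - Q ^ (3 * n - 2 * N + 2) * g ^- 2 * a0 ^+ 3
          * t n m (N + 1) * t (n + 2) (m + 1) N
      + Q ^ (6 * n - 4 * N + 4) * g ^- 4 * a0 ^+ 6
          * t (n + 1) m N * t (n + 1) (m + 1) (N + 1) = 0).
Proof.
move=> hsa hs hpa hp hwa hw _ _ hra hr t Q g a0 a1 a2 n m N.
exact: (@mainA (K C) (@isCK C) (Qv C) (gam C) (alpha C) (tau C) (taub C)
  (@cQ_neq0 C) (@cg_neq0 C) (@cal_neq0 C) (@cta_neq0 C) (@ctb_neq0 C) (@cext C)
  s si p pinv w0 w0inv r rinv
  (fun i => autK1 (hsa i)) (fun i => autK2 (hsa i)) (fun i => autKC (hsa i))
  (fun i => ssQ (hs i)) (fun i => ssg (hs i)) (fun i => ssa_d (hs i))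
  (fun i j => @ssa_n C (s i) i (hs i) j) (fun i => ssta_d (hs i)) (fun i => sstb_d (hs i))
  (fun i j => @ssta_n C (s i) i (hs i) j) (fun i j => @sstb_n C (s i) i (hs i) j)
  (autK1 hpa) (autK2 hpa) (autKC hpa) (ppQ hp) (ppg hp) (ppa hp) (ppta hp) (pptb hp)
  (autK1 hwa) (autK2 hwa) (autKC hwa) (wwQ hw) (wwg hw) (wwa hw) (wwta hw) (wwtb hw)
  (autK1 hra) (autK2 hra) (autKC hra) (rrQ hr) (rrg hr) (rra hr) (rrta hr) (rrtb hr)
  (@calQ C) n m N).
Qed.
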